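(* Let $g:\mathbb{R}^m\to\overline{\mathbb{R}}$ be a polyhedral function, written in the form $$g(z)=\max_{j\in J}\{\langle a^j,z\rangle-\alpha_j\}+\delta_{\mathrm{dom}\, g}(z),\qquad \mathrm{dom}\, g=\{z\in\mathbb{R}^m\mid \langle b^i,z\rangle\le\beta_i,\ i\in I\},$$ with $J=\{1,\dots,l\}$, $I=\{1,\dots,s\}$, $a^j,b^i\in\mathbb{R}^m$, $\alpha_j,\beta_i\in\mathbb{R}$. Let $(\bar z,\bar\lambda)\in\mathrm{gph}\,\partial g$. Then there exists $r>0$ such that for every decomposition $$\bar\lambda=\sum_{j\in J(\bar z)}\bar\sigma_j a^j+\sum_{i\in I(\bar z)}\bar\tau_i b^i,\qquad \bar\sigma_j,\bar\tau_i\ge 0,\ \sum_{j\in J(\bar z)}\bar\sigma_j=1,$$ and every $(z,\lambda)\in(\mathrm{gph}\,\partial g)\cap\mathbb{B}_r(\bar z,\bar\lambda)$, we have $$J_+(\bar z,\bar\sigma)\subset J(z)\quad\text{and}\quad I_+(\bar z,\bar\tau)\subset I(z).$$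
   Context: A proper function $g:\mathbb{R}^m\to\overline{\mathbb{R}}=[-\infty,\infty]$ is polyhedral if its epigraph is a polyhedral convex set; every such function admits a representation as in the claim. $\delta_C$ denotes the indicator function of $C$ ($0$ on $C$, $+\infty$ outside). For $j\in J$ set $C_j=\{z\in\mathrm{dom}\, g\mid g(z)=\langle a^j,z\rangle-\alpha_j\}$. For $z\in\mathrm{dom}\, g$ define the active index sets $I(z)=\{i\in I\mid\langle b^i,z\rangle=\beta_i\}$ and $J(z)=\{j\in J\mid z\in C_j\}$. The subdifferential $\partial g$ is that of convex analysis; one has $\partial g(\bar z)=\mathrm{co}\{a^j\mid j\in J(\bar z)\}+\mathrm{cone}\{b^i\mid i\in I(\bar z)\}$, so every $\bar\lambda\in\partial g(\bar z)$ has (generally non-unique) decompositions as in the claim. Given such a decomposition, $J_+(\bar z,\bar\sigma)=\{j\in J(\bar z)\mid\bar\sigma_j>0\}$ and $I_+(\bar z,\bar\tau)=\{i\in I(\bar z)\mid \bar\tau_i>0\}$. $\mathbb{B}_r(x)$ is the closed ball of radius $r$ centered at $x$; on $\mathbb{R}^m\times\mathbb{R}^m$ the Euclidean norm $\|(w,u)\|=\sqrt{\|w\|^2+\|u\|^2}$ is used. *)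

(* Defs.v *)
From HB Require Import structures.
From mathcomp Require Import all_boot all_order all_algebra.
From mathcomp Require Import boolp classical_sets reals constructive_ereal.
Set Implicit Arguments. Unset Strict Implicit. Unset Printing Implicit Defensive.
Import Order.TTheory GRing.Theory Num.Theory.
Local Open Scope ring_scope.

Definition dotp (R : realType) (m : nat) (u v : 'rV[R]_m) : R :=
  \sum_(k < m) u 0 k * v 0 k.

Definition vnorm (R : realType) (m : nat) (u : 'rV[R]_m) : R := Num.sqrt (dotp u u).

Definition domg (R : realType) (m s : nat) (b : 'I_s -> 'rV[R]_m) (beta : 'I_s -> R)
  (z : 'rV[R]_m) : bool := [forall i, dotp (b i) z <= beta i].

Definition polyg (R : realType) (m l s : nat) (a : 'I_l -> 'rV[R]_m) (alpha : 'I_l -> R)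
  (b : 'I_s -> 'rV[R]_m) (beta : 'I_s -> R) (z : 'rV[R]_m) : \bar R :=
  if domg b beta z then (\big[Order.max/-oo%E]_(j < l) (dotp (a j) z - alpha j)%:E)%E
  else (+oo)%E.

Definition subdiff (R : realType) (m : nat) (f : 'rV[R]_m -> \bar R)
  (z lam : 'rV[R]_m) : Prop :=
  f z \is a fin_num /\ forall w, (f z + (dotp lam (w - z))%:E <= f w)%E.

Definition Jact (R : realType) (m l s : nat) (a : 'I_l -> 'rV[R]_m) (alpha : 'I_l -> R)
  (b : 'I_s -> 'rV[R]_m) (beta : 'I_s -> R) (z : 'rV[R]_m) (j : 'I_l) : bool :=
  domg b beta z && (polyg a alpha b beta z == (dotp (a j) z - alpha j)%:E).

Definition Iact (R : realType) (m s : nat) (b : 'I_s -> 'rV[R]_m) (beta : 'I_s -> R)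
  (z : 'rV[R]_m) (i : 'I_s) : bool := dotp (b i) z == beta i.

(* Main.v *)
Require Import Defs.
From HB Require Import structures.
From mathcomp Require Import all_boot all_order all_algebra.
From mathcomp Require Import boolp classical_sets reals constructive_ereal.
From mathcomp Require Import ring lra.
Import Order.TTheory GRing.Theory Num.Theory.
Local Open Scope ring_scope.

Section S.
Variable R : realType.
Variable m : nat.
Implicit Types u v w : 'rV[R]_m.

Lemma dotpC u v : dotp u v = dotp v u.
Proof. by apply: eq_bigr => k _; rewrite mulrC. Qed.

Lemma dotpDr u v w : dotp u (v + w) = dotp u v + dotp u w.
Proof. by rewrite /dotp -big_split; apply: eq_bigr => k _; rewrite !mxE mulrDr. Qed.

Lemma dotpNr u v : dotp u (- v) = - dotp u v.
Proof. by rewrite /dotp -sumrN; apply: eq_bigr => k _; rewrite !mxE mulrN. Qed.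

Lemma dotpBr u v w : dotp u (v - w) = dotp u v - dotp u w.
Proof. by rewrite dotpDr dotpNr. Qed.

Lemma dotpZr u c v : dotp u (c *: v) = c * dotp u v.
Proof. by rewrite /dotp mulr_sumr; apply: eq_bigr => k _; rewrite !mxE mulrCA. Qed.

Lemma dotpDl u v w : dotp (v + w) u = dotp v u + dotp w u.
Proof. by rewrite dotpC dotpDr !(dotpC u). Qed.

Lemma dotpBl u v w : dotp (v - w) u = dotp v u - dotp w u.
Proof. by rewrite dotpC dotpBr !(dotpC u). Qed.

Lemma dotpZl u c v : dotp (c *: v) u = c * dotp v u.
Proof. by rewrite dotpC dotpZr dotpC. Qed.

Lemma dotp_suml (I : finType) (P : pred I) (F : I -> 'rV[R]_m) u :
  dotp (\sum_(i | P i) F i) u = \sum_(i | P i) dotp (F i) u.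
Proof.
rewrite /dotp exchange_big /=; apply: eq_bigr => k _.
by rewrite summxE mulr_suml.
Qed.

Definition L1 u : R := \sum_(k < m) `|u 0 k|.

Lemma L1_ge0 u : 0 <= L1 u.
Proof. by apply: sumr_ge0 => k _. Qed.

Lemma coord_le u k : `|u 0 k| <= vnorm u.
Proof.
rewrite /vnorm -sqrtr_sqr; apply: ler_wsqrtr.
rewrite /dotp (bigD1 k) //= expr2 lerDl; apply: sumr_ge0 => i _.
by rewrite -expr2 sqr_ge0.
Qed.

Lemma dotp_bound u v : `|dotp u v| <= L1 u * vnorm v.
Proof.
rewrite /dotp /L1 mulr_suml; apply: le_trans (ler_norm_sum _ _ _) _.
apply: ler_sum => k _; rewrite normrM; apply: ler_wpM2l => //; exact: coord_le.
Qed.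

Lemma vnorm_ge0 u : 0 <= vnorm u.
Proof. exact: sqrtr_ge0. Qed.

Lemma sqrt_le1 (x y r : R) : 0 <= x -> 0 <= y -> Num.sqrt (x ^+ 2 + y ^+ 2) <= r -> x <= r.
Proof.
move=> x0 y0 h; apply: le_trans h; rewrite -{1}(ger0_norm x0) -sqrtr_sqr.
by apply: ler_wsqrtr; rewrite lerDl sqr_ge0.
Qed.

Lemma fin_small (I : finType) (P : pred I) (c e : I -> R) :
  (forall k, P k -> 0 < e k) ->
  exists2 t, 0 < t & forall k, P k -> t * `|c k| <= e k.
Proof.
move=> he; set S := \sum_(k | P k) `|c k| / e k.
have S0 : 0 <= S by apply: sumr_ge0 => k Pk; rewrite divr_ge0 // ltW // he.
exists (1 + S)^-1; first by rewrite invr_gt0; lra.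
move=> k Pk; have ek := he k Pk.
have : `|c k| / e k <= S.
  by rewrite /S (bigD1 k) //= lerDl; apply: sumr_ge0 => i /andP[Pi _]; rewrite divr_ge0 // ltW // he.
rewrite ler_pdivrMr // => h.
rewrite mulrC ler_pdivrMr; last lra.
apply: le_trans h _; rewrite mulrDr mulr1; have := mulr_ge0 (ltW ek) S0; lra.
Qed.

End S.
Lemma fin_pos (R : realType) (I : finType) (Q : I -> R -> Prop) :
  (forall k t t', 0 < t' -> t' <= t -> Q k t -> Q k t') ->
  (forall k, exists2 t, 0 < t & Q k t) -> exists2 t, 0 < t & forall k, Q k t.
Proof.
move=> mono h.
have hh : forall k, exists t, 0 < t /\ Q k t by move=> k; have [t ? ?] := h k; exists t.
have [f hf] := choice hh.
have [t t0 ht] := @fin_small R I xpredT (fun _ => 1) f (fun k _ => proj1 (hf k)).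
exists t => // k; apply: mono t0 _ (proj2 (hf k)).
by have := ht k isT; rewrite normr1 mulr1.
Qed.
Arguments L1 {R m} u.
Arguments dotpC {R m} u v.
Arguments L1_ge0 {R m} u.
Arguments dotp_bound {R m} u v.
Arguments vnorm_ge0 {R m} u.
Arguments sqrt_le1 {R x y r}.
Arguments fin_pos {R I Q}.

Section P.
Variables (R : realType) (m l s : nat) (hl : (0 < l)%N)
  (a : 'I_l -> 'rV[R]_m) (alpha : 'I_l -> R)
  (b : 'I_s -> 'rV[R]_m) (beta : 'I_s -> R).

Definition A k z := dotp (a k) z - alpha k.
Definition Gr z : R := fine (polyg a alpha b beta z).
Definition dom z := domg b beta z.

Lemma gval z : dom z -> polyg a alpha b beta z = (Gr z)%:E /\
  (forall k, A k z <= Gr z) /\ exists j, A j z = Gr z.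
Proof.
move=> dz; rewrite /Gr /polyg; rewrite /dom in dz; rewrite dz.
have [j0 _ eq] := eq_bigmax (x:=(-oo)%E) (Ordinal hl) xpredT (fun j => (A j z)%:E) isT (fun i _ => leNye _).
rewrite eq /=; split => //; split; last by exists j0.
move=> k; rewrite -lee_fin -eq.
exact: (le_bigmax (-oo)%E (fun j => (A j z)%:E) k).
Qed.

Lemma JactE z j : dom z -> Jact a alpha b beta z j = (A j z == Gr z).
Proof.
move=> dz; rewrite /Jact -/(dom z) dz /=; have [-> _] := @gval z dz.
by rewrite eqe eq_sym.
Qed.

Lemma subdiffE z lam : subdiff (polyg a alpha b beta) z lam ->
  dom z /\ forall w, dom w -> Gr z + dotp lam (w - z) <= Gr w.
Proof.
case=> fz h; have dz : dom z.
  by move: fz; rewrite /polyg /dom; case: (domg b beta z).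
split => // w dw; have := h w; have [-> _] := @gval z dz; have [-> _] := @gval w dw.
by rewrite lee_fin.
Qed.

Lemma dotp_comb (u z y : 'rV[R]_m) (t : R) : dotp u (z + t *: (z - y)) = dotp u z + t * (dotp u z - dotp u y).
Proof. by rewrite dotpDr dotpZr dotpBr. Qed.

Lemma min_facts (t1 t2 : R) : 0 < t1 -> 0 < t2 ->
  0 < Num.min t1 t2 /\ Num.min t1 t2 <= t1 /\ Num.min t1 t2 <= t2.
Proof. by move=> h1 h2; rewrite lt_min h1 h2 ge_min lexx ge_min lexx orbT. Qed.

Lemma scale_le (t t' c e : R) : 0 <= t -> t <= t' -> t' * `|c| <= e -> t * c <= e.
Proof.
move=> t0 tt' h; apply: le_trans h; apply: le_trans (_ : t * `|c| <= _).
  by apply: ler_wpM2l => //; exact: ler_norm.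
by apply: ler_wpM2r.
Qed.

Lemma affA (z y lam : 'rV[R]_m) : dom z -> dom y ->
  (forall j, Jact a alpha b beta z j -> Jact a alpha b beta y j) ->
  (forall i, Iact b beta z i -> Iact b beta y i) ->
  (forall w, dom w -> Gr z + dotp lam (w - z) <= Gr w) ->
  Gr z - Gr y = dotp lam (z - y).
Proof.
move=> dz dy hJ hI hs.
have [_ [Az _]] := @gval z dz; have [_ [Ay _]] := @gval y dy.
have le1 : Gr z - Gr y <= dotp lam (z - y).
  by have := hs y dy; rewrite !dotpBr; lra.
have pos1 : forall k, ~~ Jact a alpha b beta z k -> 0 < Gr z - A k z.
  by move=> k; rewrite (@JactE z k dz) => hk; rewrite subr_gt0 lt_neqAle hk Az.
have [t1 t10 ht1] := @fin_small _ _ (fun k => ~~ Jact a alpha b beta z k)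
   (fun k => Gr y - A k y) (fun k => Gr z - A k z) pos1.
have bz i : dotp (b i) z <= beta i by move: dz => /forallP.
have pos2 : forall i, ~~ Iact b beta z i -> 0 < beta i - dotp (b i) z.
  by move=> i; rewrite /Iact => hi; rewrite subr_gt0 lt_neqAle hi bz.
have [t2 t20 ht2] := @fin_small _ _ (fun i => ~~ Iact b beta z i)
   (fun i => beta i - dotp (b i) y) (fun i => beta i - dotp (b i) z) pos2.
have [t0 [tt1 tt2]] := @min_facts t1 t2 t10 t20.
set t := Num.min t1 t2 in t0 tt1 tt2.
set w := z + t *: (z - y).
have dw : dom w.
  apply/forallP => i; rewrite dotp_comb.
  case: (boolP (Iact b beta z i)) => hi.
    have := hI i hi; rewrite /Iact in hi *; move/eqP: hi => -> /eqP ->.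
    by rewrite subrr mulr0 addr0.
  have e1 := @scale_le _ _ _ _ (ltW t0) tt2 (ht2 i hi).
  have e2 : t * (dotp (b i) z - beta i) <= 0.
    by rewrite mulr_ge0_le0 // ?(ltW t0) // subr_le0.
  simpl in e1; lra.
have [_ [_ [j Aj]]] := @gval w dw.
have Awj : A j w = A j z + t * (A j z - A j y).
  by rewrite /A dotp_comb; ring.
have Gw : Gr w <= Gr z + t * (Gr z - Gr y).
  rewrite -Aj Awj.
  case: (boolP (Jact a alpha b beta z j)) => hj.
    have := hJ j hj; rewrite (@JactE y j dy) => /eqP ->.
    by move: hj; rewrite (@JactE z j dz) => /eqP ->.
  have e1 := @scale_le _ _ _ _ (ltW t0) tt1 (ht1 j hj).
  have e2 : t * (A j z - Gr z) <= 0.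
    by rewrite mulr_ge0_le0 // ?(ltW t0) // subr_le0.
  simpl in e1; lra.
have := hs w dw; rewrite /w addrAC subrr add0r dotpZr => h.
have : t * dotp lam (z - y) <= t * (Gr z - Gr y) by lra.
rewrite ler_pM2l // => h2; lra.
Qed.


Lemma main (zb lamb : 'rV[R]_m)
  (hgph : subdiff (polyg a alpha b beta) zb lamb) :
  exists2 r : R, 0 < r &
    forall (sigma : 'I_l -> R) (tau : 'I_s -> R),
      (forall j, Jact a alpha b beta zb j -> 0 <= sigma j) ->
      (forall i, Iact b beta zb i -> 0 <= tau i) ->
      \sum_(j < l | Jact a alpha b beta zb j) sigma j = 1 ->
      lamb = \sum_(j < l | Jact a alpha b beta zb j) sigma j *: a j
             + \sum_(i < s | Iact b beta zb i) tau i *: b i ->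
      forall z lam : 'rV[R]_m,
        subdiff (polyg a alpha b beta) z lam ->
        Num.sqrt (vnorm (z - zb) ^+ 2 + vnorm (lam - lamb) ^+ 2) <= r ->
        (forall j, Jact a alpha b beta zb j -> 0 < sigma j -> Jact a alpha b beta z j) /\
        (forall i, Iact b beta zb i -> 0 < tau i -> Iact b beta z i).
Proof.
have [dzb hsb] := @subdiffE zb lamb hgph.
have [_ [Azb [j0 Aj0]]] := @gval zb dzb.
have bzb i : dotp (b i) zb <= beta i by move: dzb => /forallP.
have pos3 : forall k, ~~ Jact a alpha b beta zb k -> 0 < (Gr zb - A k zb) / 2.
  move=> k; rewrite (@JactE zb k dzb) => hk.
  by rewrite divr_gt0 // subr_gt0 lt_neqAle hk Azb.
have [t1 t10 ht1] := @fin_small _ _ (fun k => ~~ Jact a alpha b beta zb k)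
   (fun k => L1 (a k - a j0)) (fun k => (Gr zb - A k zb) / 2) pos3.
have pos4 : forall i, ~~ Iact b beta zb i -> 0 < (beta i - dotp (b i) zb) / 2.
  by move=> i; rewrite /Iact => hi; rewrite divr_gt0 // subr_gt0 lt_neqAle hi bzb.
have [t2 t20 ht2] := @fin_small _ _ (fun i => ~~ Iact b beta zb i)
   (fun i => L1 (b i)) (fun i => (beta i - dotp (b i) zb) / 2) pos4.
have [r00 [rt1 rt2]] := @min_facts t1 t2 t10 t20.
set r0 := Num.min t1 t2 in r00 rt1 rt2.
have incl : forall z, dom z -> vnorm (z - zb) <= r0 ->
   (forall j, Jact a alpha b beta z j -> Jact a alpha b beta zb j) /\
   (forall i, Iact b beta z i -> Iact b beta zb i).
  move=> z dz nz; have [_ [Az _]] := @gval z dz; split.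
    move=> j; apply: contraTT => hj.
    have e := ht1 j hj; rewrite ger0_norm ?L1_ge0 // in e.
    have bd := dotp_bound (a j - a j0) (z - zb).
    have e3 : L1 (a j - a j0) * vnorm (z - zb) <= t1 * L1 (a j - a j0).
      by rewrite mulrC ler_wpM2r ?L1_ge0 // (le_trans nz).
    have e4 := ler_norm (dotp (a j - a j0) (z - zb)).
    have gt : Gr zb - A j zb > 0 by have := pos3 j hj; lra.
    have h1 : A j z < Gr z.
      have := Az j0; move: e4 bd e3 e gt; rewrite /A dotpBl !dotpBr -Aj0 /A; lra.
    by rewrite (@JactE z j dz) (lt_eqF h1).
  move=> i; apply: contraTT => hi.
  have e := ht2 i hi; rewrite ger0_norm ?L1_ge0 // in e.
  have bd := dotp_bound (b i) (z - zb).
  have e3 : L1 (b i) * vnorm (z - zb) <= t2 * L1 (b i).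
    by rewrite mulrC ler_wpM2r ?L1_ge0 // (le_trans nz).
  have e4 := ler_norm (dotp (b i) (z - zb)).
  have gt := pos4 i hi.
  have h1 : dotp (b i) z < beta i.
    by move: e4 bd e3 e gt; rewrite !dotpBr; lra.
  by rewrite /Iact (lt_eqF h1).
pose pat z := ([set j | Jact a alpha b beta z j], [set i | Iact b beta z i]).
pose gap z := Gr z - Gr zb - dotp lamb (z - zb).
pose Q p t := forall z lam, dom z -> vnorm (z - zb) <= r0 -> pat z = p ->
  (forall w, dom w -> Gr z + dotp lam (w - z) <= Gr w) ->
  vnorm (lam - lamb) <= t -> gap z = 0.
have hQ : forall p, exists2 t, 0 < t & Q p t.
  move=> p.
  case: (pselect (exists z0, dom z0 /\ vnorm (z0 - zb) <= r0 /\ pat z0 = p)) =>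
     [[z0 [dz0 [nz0 pz0]]] | nex]; last first.
    by exists 1 => // z lam dz nz pz; exfalso; apply: nex; exists z.
  have same : forall z, pat z = p ->
     (forall j, Jact a alpha b beta z0 j = Jact a alpha b beta z j) /\
     (forall i, Iact b beta z0 i = Iact b beta z i).
    move=> z pz; rewrite -pz in pz0; case: pz0 => /setP EJ /setP EI; split.
      by move=> j; have := EJ j; rewrite !inE.
    by move=> i; have := EI i; rewrite !inE.
  have gap0 : 0 <= gap z0 by have := hsb z0 dz0; rewrite /gap; lra.
  case: (eqVneq (gap z0) 0) => g0.
    exists 1 => // z lam dz nz pz hs _.
    have [sJ sI] := same z pz.
    have hs0 : forall w, dom w -> Gr z0 + dotp lamb (w - z0) <= Gr w.
      move=> w dw; have := hsb w dw; move: g0; rewrite /gap !dotpBr; lra.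
    have e := affA z0 z lamb dz0 dz (fun j => ltac:(by rewrite sJ)) (fun i => ltac:(by rewrite sI)) hs0.
    by move: e g0; rewrite /gap !dotpBr; lra.
  have gpos : 0 < gap z0 by rewrite lt_neqAle eq_sym g0 gap0.
  have L0 := L1_ge0 (z0 - zb).
  exists (gap z0 / (L1 (z0 - zb) + 1)); first by rewrite divr_gt0 //; lra.
  move=> z lam dz nz pz hs nl.
  have [sJ sI] := same z pz.
  have [iJ iI] := incl z dz nz.
  have e1 := affA z zb lam dz dzb iJ iI hs.
  have e2 := affA z z0 lam dz dz0 (fun j => ltac:(by rewrite sJ)) (fun i => ltac:(by rewrite sI)) hs.
  set t := gap z0 / (L1 (z0 - zb) + 1) in nl.
  have ht : t * (L1 (z0 - zb) + 1) = gap z0 by rewrite /t divfK //; lra.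
  have bd := dotp_bound (z0 - zb) (lam - lamb).
  have e4 := ler_norm (dotp (z0 - zb) (lam - lamb)).
  have e3 : L1 (z0 - zb) * vnorm (lam - lamb) <= L1 (z0 - zb) * t by rewrite ler_wpM2l.
  have tpos : 0 < t by rewrite /t divr_gt0 //; lra.
  exfalso; move: e1 e2 ht bd e4 e3 gpos tpos.
  rewrite /gap dotpBr !dotpBl !dotpBr (dotpC z0) (dotpC zb) (dotpC z0 lamb) (dotpC zb lamb).
  lra.
have hmono : forall p t t', 0 < t' -> t' <= t -> Q p t -> Q p t'.
  move=> p t t' _ tt' h z lam dz nz pz hs nl; apply: h dz nz pz hs _; exact: le_trans tt'.
have [t t0 ht] := fin_pos hmono hQ.
have [rr0 [rr1 rr2]] := @min_facts r0 t r00 t0.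
exists (Num.min r0 t) => // sigma tau hsig htau hsum hdec z lam hsub hball.
have [dz hs] := @subdiffE z lam hsub.
have nz : vnorm (z - zb) <= r0.
  by apply: le_trans rr1; exact: sqrt_le1 (vnorm_ge0 _) (vnorm_ge0 _) hball.
have nl : vnorm (lam - lamb) <= t.
  apply: le_trans rr2; rewrite addrC in hball.
  exact: sqrt_le1 (vnorm_ge0 _) (vnorm_ge0 _) hball.
have g0 := ht (pat z) z lam dz nz erefl hs nl.
have [_ [Az _]] := @gval z dz.
have bz i : dotp (b i) z <= beta i by move: dz => /forallP.
pose F j := sigma j * (Gr z - Gr zb - dotp (a j) (z - zb)).
pose G i := tau i * (- dotp (b i) (z - zb)).
have key : \sum_(j | Jact a alpha b beta zb j) F j + \sum_(i | Iact b beta zb i) G i = 0.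
  move: g0; rewrite /gap hdec dotpDl !dotp_suml.
  have -> : \sum_(j | Jact a alpha b beta zb j) F j =
      (Gr z - Gr zb) * \sum_(j | Jact a alpha b beta zb j) sigma j -
      \sum_(j | Jact a alpha b beta zb j) dotp (sigma j *: a j) (z - zb).
    rewrite mulr_sumr -sumrB; apply: eq_bigr => j _.
    by rewrite /F dotpZl mulrBr mulrC.
  have -> : \sum_(i | Iact b beta zb i) G i =
      - \sum_(i | Iact b beta zb i) dotp (tau i *: b i) (z - zb).
    rewrite -sumrN; apply: eq_bigr => i _.
    by rewrite /G dotpZl mulrN.
  rewrite hsum mulr1; lra.
have Fge0 : forall j, Jact a alpha b beta zb j -> 0 <= F j.
  move=> j hj; apply: mulr_ge0; first exact: hsig.
  move: hj; rewrite (@JactE zb j dzb) => /eqP Aj.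
  have := Az j; move: Aj; rewrite /A dotpBr; lra.
have Gge0 : forall i, Iact b beta zb i -> 0 <= G i.
  move=> i hi; apply: mulr_ge0; first exact: htau.
  move: hi; rewrite /Iact => /eqP bi.
  have := bz i; move: bi; rewrite dotpBr; lra.
have S1 : 0 <= \sum_(j | Jact a alpha b beta zb j) F j by apply: sumr_ge0.
have S2 : 0 <= \sum_(i | Iact b beta zb i) G i by apply: sumr_ge0.
have S1e : \sum_(j | Jact a alpha b beta zb j) F j = 0 by lra.
have S2e : \sum_(i | Iact b beta zb i) G i = 0 by lra.
split.
  move=> j hj sj; have := psumr_eq0P Fge0 S1e hj; rewrite /F => /eqP.
  rewrite mulf_eq0 gt_eqF //= => /eqP e.
  rewrite (@JactE z j dz); apply/eqP.
  move: hj; rewrite (@JactE zb j dzb) => /eqP Aj.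
  by move: Aj e; rewrite /A dotpBr; lra.
move=> i hi ti; have := psumr_eq0P Gge0 S2e hi; rewrite /G => /eqP.
rewrite mulf_eq0 gt_eqF //= => /eqP e.
move: hi; rewrite /Iact => /eqP bi; apply/eqP.
by move: bi e; rewrite dotpBr; lra.
Qed.

End P.

Theorem lemma2p1 (R : realType) (m l s : nat) (hl : (0 < l)%N)
  (a : 'I_l -> 'rV[R]_m) (alpha : 'I_l -> R)
  (b : 'I_s -> 'rV[R]_m) (beta : 'I_s -> R)
  (zb lamb : 'rV[R]_m)
  (hgph : subdiff (polyg a alpha b beta) zb lamb) :
  exists2 r : R, 0 < r &
    forall (sigma : 'I_l -> R) (tau : 'I_s -> R),
      (forall j, Jact a alpha b beta zb j -> 0 <= sigma j) ->
      (forall i, Iact b beta zb i -> 0 <= tau i) ->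
      \sum_(j < l | Jact a alpha b beta zb j) sigma j = 1 ->
      lamb = \sum_(j < l | Jact a alpha b beta zb j) sigma j *: a j
             + \sum_(i < s | Iact b beta zb i) tau i *: b i ->
      forall z lam : 'rV[R]_m,
        subdiff (polyg a alpha b beta) z lam ->
        Num.sqrt (vnorm (z - zb) ^+ 2 + vnorm (lam - lamb) ^+ 2) <= r ->
        (forall j, Jact a alpha b beta zb j -> 0 < sigma j -> Jact a alpha b beta z j) /\
        (forall i, Iact b beta zb i -> 0 < tau i -> Iact b beta z i).
Proof. exact: (@main R m l s hl a alpha b beta zb lamb hgph). Qed.
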